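(* Let $q$ be a prime power, let $k\ge 5$ and $n=2k\le q$. Let $\alpha_1,\dots,\alpha_n\in\mathbb{F}_q$ be pairwise distinct, let $G_{k-1,k-2}$ be the $k\times n$ matrix whose rows are $(\alpha_1^{e},\dots,\alpha_n^{e})$ for $e=0,1,\dots,k-3,k,k+1$, let $\mathbf{v}=(v_1,\dots,v_n)\in(\mathbb{F}_q^* )^n$, and let $C_{\mathbf v}$ be the linear code generated by $G_{k-1,k-2}\cdot\mathrm{diag}(v_1,\dots,v_n)$. Let $u_i=\prod_{j\ne i}(\alpha_i-\alpha_j)^{-1}$ and $S_t=S_t(\alpha_1,\dots,\alpha_n)$. Then $C_{\mathbf v}$ is self-dual if and only if (1) there exists $\lambda\in\mathbb{F}_q^*$ with $v_i^2=\lambda u_i$ for all $1\le i\le n$, and (2) $S_1=S_2=S_3=0$.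
   Context: Convention: $0^0=1$. $S_t(x_1,\dots,x_m)=\sum_{t_1+\dots+t_m=t,\ t_i\ge0}x_1^{t_1}\cdots x_m^{t_m}$ is the complete homogeneous symmetric polynomial of degree $t$. A linear code $C$ is self-dual if $C=C^\perp$, where $C^\perp$ is the dual with respect to the Euclidean inner product. *)

(* Defs.v *)
From HB Require Import structures.
From mathcomp Require Import all_boot all_order all_algebra all_field.
Set Implicit Arguments. Unset Strict Implicit. Unset Printing Implicit Defensive.
Import GRing.Theory.
Local Open Scope ring_scope.

Definition code_of (F : fieldType) (m n : nat) (M : 'M[F]_(m, n)) : pred 'rV[F]_n :=
  fun x => (x <= M)%MS.

Definition eucl_dot (F : fieldType) (n : nat) (x y : 'rV[F]_n) : F :=
  \sum_(i < n) x 0 i * y 0 i.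

Definition dual_code (F : finFieldType) (n : nat) (C : pred 'rV[F]_n) : pred 'rV[F]_n :=
  fun x => [forall y : 'rV[F]_n, (y \in C) ==> (eucl_dot x y == 0)].

Definition self_dual (F : finFieldType) (n : nat) (C : pred 'rV[F]_n) : Prop :=
  C =i dual_code C.

Definition gexp (k : nat) (i : 'I_k) : nat :=
  if (i < k - 2)%N then (i : nat) else (i + 2)%N.

Definition Gmat (F : fieldType) (k n : nat) (alpha : 'I_n -> F) : 'M[F]_(k, n) :=
  \matrix_(i < k, j < n) alpha j ^+ gexp i.

Definition complete_hom (F : fieldType) (n t : nat) (x : 'I_n -> F) : F :=
  \sum_(m : {ffun 'I_n -> 'I_t.+1} | (\sum_(i < n) (m i : nat))%N == t)
     \prod_(i < n) x i ^+ m i.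

Definition ucoef (F : fieldType) (n : nat) (alpha : 'I_n -> F) (i : 'I_n) : F :=
  \prod_(j < n | j != i) (alpha i - alpha j)^-1.

(* Main.v *)
Require Import Defs.
From HB Require Import structures.
From mathcomp Require Import all_boot all_order all_algebra all_field.
From mathcomp Require Import zify ring.
Set Implicit Arguments. Unset Strict Implicit. Unset Printing Implicit Defensive.
Import GRing.Theory.
Local Open Scope ring_scope.

Definition piL (F : fieldType) (n : nat) (alpha : 'I_n -> F) (i : 'I_n) : {poly F} :=
  \prod_(j < n | j != i) ('X - (alpha j)%:P).

Lemma piL_root (F : fieldType) n (alpha : 'I_n -> F) i l :
  l != i -> (piL alpha i).[alpha l] = 0.
Proof.
move=> li; rewrite /piL horner_prod (bigD1 l) //= hornerXsubC subrr mul0r //.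
Qed.

Lemma piL_self (F : fieldType) n (alpha : 'I_n -> F) (ha : injective alpha) i :
  (piL alpha i).[alpha i] * (\prod_(j < n | j != i) (alpha i - alpha j)^-1) = 1.
Proof.
rewrite /piL horner_prod prodfV.
under eq_bigr do rewrite hornerXsubC.
apply: mulfV; rewrite prodf_seq_neq0; apply/allP => j _; apply/implyP => ji.
by rewrite subr_eq0; apply/eqP => /ha /eqP; rewrite eq_sym (negbTE ji).
Qed.

Lemma piL_size (F : fieldType) n (alpha : 'I_n -> F) i :
  size (piL alpha i) = n.
Proof.
rewrite /piL size_prod; last by move=> j _; rewrite polyXsubC_eq0.
under eq_bigr do rewrite size_XsubC.
rewrite sum_nat_const cardC1 card_ord.
have : (0 < n)%N by case: i => /= m; case: (n) => //.
move=> ?; lia.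
Qed.

Lemma piL_coef (F : fieldType) n (alpha : 'I_n -> F) i :
  (piL alpha i)`_n.-1 = 1.
Proof.
have /monicP := monic_prod (index_enum _) (P := fun j => j != i)
   (F := fun j => 'X - (alpha j)%:P) (fun j _ => monicXsubC (alpha j)).
by rewrite -/(piL alpha i) lead_coefE piL_size.
Qed.

Lemma piL_sum (F : fieldType) m (alpha : 'I_m.+1 -> F) (w : 'I_m.+1 -> F) i :
  (forall s, (s < m)%N -> \sum_j w j * alpha j ^+ s = 0) ->
  \sum_j w j * (piL alpha i).[alpha j] = \sum_j w j * alpha j ^+ m.
Proof.
move=> hs.
have hsz : (size (piL alpha i) <= m.+1)%N by rewrite piL_size.
under eq_bigr do rewrite (horner_coef_wide _ hsz) mulr_sumr.
rewrite exchange_big big_ord_recr /= big1 ?add0r.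
  have := piL_coef alpha i => /= ->; apply: eq_bigr => j _; ring.
move=> s _ /=; transitivity ((piL alpha i)`_s * \sum_j w j * alpha j ^+ s).
  by rewrite mulr_sumr; apply: eq_bigr => j _; ring.
by rewrite hs ?mulr0.
Qed.

Lemma dual_trick (F : fieldType) n (alpha : 'I_n -> F) (ha : injective alpha)
   (w : 'I_n -> F) :
  (forall s, (s < n.-1)%N -> \sum_j w j * alpha j ^+ s = 0) ->
  forall i, w i = (\sum_j w j * alpha j ^+ n.-1) * ucoef alpha i.
Proof.
case: n alpha ha w => [|m] alpha ha w hs i; first by case: i.
rewrite -(piL_sum i hs) (bigD1 i) //= big1 ?addr0.
  by rewrite -mulrA piL_self // mulr1.
by move=> j ji; rewrite piL_root // mulr0.
Qed.

Lemma lemA (F : fieldType) n (alpha : 'I_n -> F) (ha : injective alpha) s :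
  (s < n)%N -> \sum_i ucoef alpha i * alpha i ^+ s = (s == n.-1)%:R.
Proof.
move=> sn.
pose L := \sum_i (alpha i ^+ s * ucoef alpha i) *: piL alpha i.
have hL : forall l, L.[alpha l] = alpha l ^+ s.
  move=> l; rewrite /L horner_sum (bigD1 l) //= big1 ?addr0.
    by rewrite hornerZ -mulrA [ucoef _ _ * _]mulrC piL_self // mulr1.
  by move=> j jl; rewrite hornerZ piL_root ?mulr0 // eq_sym.
have hD : L - 'X^s = 0.
  apply/eqP; apply/negPn/negP => hD.
  have := max_poly_roots hD (rs := map alpha (enum 'I_n)).
  rewrite map_inj_uniq // enum_uniq size_map size_enum_ord.
  have -> : all (root (L - 'X^s)) [seq alpha i | i <- enum 'I_n].
    apply/allP => x /mapP [l _ ->]; by rewrite /root hornerD hornerN hL hornerXn subrr.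
  move=> /(_ isT isT); apply/negP; rewrite -leqNgt.
  apply/leq_sizeP => j hj; rewrite coefB coef_sum coefXn.
  have -> : (j == s) = false by apply/negbTE; rewrite neq_ltn (leq_trans sn hj) orbT.
  rewrite subr0 big1 // => i _; rewrite coefZ nth_default ?mulr0 // piL_size //.
have := congr1 (fun p : {poly F} => p`_n.-1) hD.
rewrite coefB coef_sum coefXn coef0 => /eqP; rewrite subr_eq0 => /eqP E; rewrite eq_sym -E.
apply: eq_bigr => i _; rewrite coefZ piL_coef; ring.
Qed.

Definition Qp (F : fieldType) n (alpha : 'I_n -> F) (t : nat) : {poly F} :=
  \prod_(j < n) \sum_(l < t.+1) ((alpha j)%:P * 'X) ^+ l.

Lemma Qp_coef (F : fieldType) n (alpha : 'I_n -> F) t :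
  complete_hom t alpha = (Qp alpha t)`_t.
Proof.
rewrite /Qp bigA_distr_bigA coef_sum /complete_hom big_mkcond /=.
apply: eq_bigr => f _.
have -> : \prod_i ((alpha i)%:P * 'X) ^+ f i
   = (\prod_i alpha i ^+ f i)%:P * 'X^(\sum_i (f i : nat)).
  rewrite -prodrXr rmorph_prod -big_split /=.
  by apply: eq_bigr => i _; rewrite exprMn rmorphXn.
rewrite coefCM coefXn eq_sym; case: eqP => _; by rewrite ?mulr1 ?mulr0.
Qed.

Definition Rp (F : fieldType) n (alpha : 'I_n -> F) : {poly F} :=
  \prod_(j < n) (1 - (alpha j)%:P * 'X).

Lemma coef_step (F : fieldType) (c : F) (p : {poly F}) k :
  ((1 - c%:P * 'X) * p)`_k = p`_k - (if (k : nat) == 0%N then 0 else c * p`_k.-1).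
Proof.
by rewrite mulrBl mul1r coefB -mulrA coefCM coefXM; case: (k == 0%N); rewrite ?mulr0.
Qed.

Lemma Rp_rec (F : fieldType) n (alpha : 'I_n.+1 -> F) :
  Rp alpha = (1 - (alpha ord0)%:P * 'X) * Rp (fun i => alpha (lift ord0 i)).
Proof. by rewrite /Rp big_ord_recl. Qed.

Lemma Rp_high (F : fieldType) n (alpha : 'I_n -> F) k :
  (n < k)%N -> (Rp alpha)`_k = 0.
Proof.
elim: n alpha k => [|n IH] alpha k hk.
  by rewrite /Rp big_ord0 coefC; case: k hk.
rewrite Rp_rec coef_step IH; last by lia.
case: k hk => // k hk /=; rewrite IH ?mulr0 ?subr0 //.
Qed.

Lemma Rp_hom (F : fieldType) n (alpha : 'I_n -> F) (y : F) :
  \sum_(k < n.+1) (Rp alpha)`_k * y ^+ (n - k) = \prod_(j < n) (y - alpha j).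
Proof.
elim: n alpha => [|n IH] alpha.
  by rewrite big_ord_recl big_ord0 big_ord0 /Rp big_ord0 coefC /= addr0 mulr1.
rewrite [RHS]big_ord_recl -IH Rp_rec.
set c := alpha ord0; set p := Rp _.
under eq_bigr do rewrite coef_step mulrBl.
rewrite sumrB.
have S1 : \sum_(k < n.+2) p`_k * y ^+ (n.+1 - k) = y * \sum_(k < n.+1) p`_k * y ^+ (n - k).
  rewrite big_ord_recr /= Rp_high // mul0r addr0 mulr_sumr.
  apply: eq_bigr => k _; rewrite subSn ?exprS; last by have := ltn_ord k.
  ring.
have S2 : \sum_(k < n.+2) (if (k : nat) == 0%N then 0 else c * p`_k.-1) * y ^+ (n.+1 - k)
   = c * \sum_(k < n.+1) p`_k * y ^+ (n - k).
  rewrite big_ord_recl /= mul0r add0r mulr_sumr.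
  by apply: eq_bigr => k _; rewrite /bump /= add1n subSS mulrA.
rewrite S1 S2; ring.
Qed.

Definition apow (F : fieldType) n (alpha : 'I_n -> F) (m : nat) : F :=
  \sum_i ucoef alpha i * alpha i ^+ m.

Lemma widen0 (F : fieldType) (G : nat -> F) m M :
  (m <= M)%N -> (forall k, (m <= k < M)%N -> G k = 0) ->
  \sum_(k < m) G k = \sum_(k < M) G k.
Proof.
move=> hm hG; rewrite (big_ord_widen M G hm) big_mkcond /=.
apply: eq_bigr => k _; case: ifP => // hk; rewrite hG //.
by rewrite ltn_ord andbT leqNgt hk.
Qed.

Lemma F3 (F : fieldType) n (alpha : 'I_n -> F) (ha : injective alpha) s :
  (0 < n)%N -> (0 < s)%N ->
  \sum_(j < s.+1) (Rp alpha)`_j * apow alpha (n.-1 + (s - j)) = 0.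
Proof.
move=> n0 s0.
pose G k := (Rp alpha)`_k * apow alpha (s.-1 + (n - k)).
have H0 : \sum_(k < n.+1) G k = 0.
  transitivity (\sum_i ucoef alpha i * alpha i ^+ s.-1 *
                  \sum_(k < n.+1) (Rp alpha)`_k * alpha i ^+ (n - k)).
    rewrite /G /apow.
    under eq_bigr do rewrite mulr_sumr.
    rewrite exchange_big /=; apply: eq_bigr => i _; rewrite mulr_sumr.
    apply: eq_bigr => k _; rewrite exprD; ring.
  apply: big1 => i _; rewrite Rp_hom (bigD1 i) //= subrr mul0r mulr0 //.
have hGhigh : forall k, (n < k)%N -> G k = 0 by move=> k hk; rewrite /G Rp_high // mul0r.
transitivity (\sum_(k < n.+1) G k); last exact: H0.
transitivity (\sum_(j < s.+1) G j).
  apply: eq_bigr => j _; have hj := ltn_ord j.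
  case: (ssrnat.leqP j n) => hjn.
    by rewrite /G; congr (_ * apow _ _); lia.
  by rewrite hGhigh // /G Rp_high // mul0r.
rewrite (@widen0 _ G s.+1 (maxn n s).+1); last 2 first.
- by rewrite ltnS leq_maxr.
- move=> k /andP [hk1 hk2]; case: (ssrnat.leqP k n) => hkn; last by rewrite hGhigh.
  rewrite /G /apow lemA //; last by lia.
  have -> : (s.-1 + (n - k) == n.-1)%N = false by apply/negbTE; lia.
  by rewrite mulr0.
rewrite [RHS](@widen0 _ G n.+1 (maxn n s).+1) //.
- by rewrite ltnS leq_maxl.
- by move=> k /andP [hk1 hk2]; rewrite hGhigh.
Qed.

Lemma low0_div (F : fieldType) (p : {poly F}) N :
  (forall k, (k < N)%N -> p`_k = 0) -> exists c, p = c * 'X^N.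
Proof.
move=> h; exists (drop_poly N p).
rewrite -[LHS](poly_take_drop N) [take_poly N p](_ : _ = 0) ?add0r //.
by apply/polyP => k; rewrite coef_take_poly coef0; case: ifP => // /h.
Qed.

Lemma RQ (F : fieldType) n (alpha : 'I_n -> F) t :
  exists c, Rp alpha * Qp alpha t - 1 = c * 'X^(t.+1).
Proof.
have -> : Rp alpha * Qp alpha t = \prod_j (1 - ((alpha j) ^+ t.+1)%:P * 'X^(t.+1)).
  rewrite /Rp /Qp -big_split /=; apply: eq_bigr => j _.
  have := subrX1 ((alpha j)%:P * 'X) t.+1.
  rewrite exprMn -rmorphXn => h; rewrite -[RHS]opprB h; ring.
apply: (big_ind (fun p => exists c, p - 1 = c * 'X^(t.+1))).
- by exists 0; rewrite subrr mul0r.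
- move=> p q [c1 h1] [c2 h2]; exists (c1 * q + c2).
  have -> : p = c1 * 'X^(t.+1) + 1 by rewrite -h1; ring.
  have -> : q = c2 * 'X^(t.+1) + 1 by rewrite -h2; ring.
  ring.
- by move=> j _; exists (- (alpha j ^+ t.+1)%:P); ring.
Qed.

Lemma S_identity (F : fieldType) n (alpha : 'I_n -> F) (ha : injective alpha) t :
  (0 < n)%N -> apow alpha (n.-1 + t) = complete_hom t alpha.
Proof.
move=> n0.
pose A := \poly_(r < t.+1) apow alpha (n.-1 + r).
have hR0 : (Rp alpha)`_0 = 1.
  by rewrite -horner_coef0 /Rp horner_prod; apply: big1 => j _; rewrite !hornerE; ring.
have [c1 h1] : exists c, Rp alpha * A - 1 = c * 'X^(t.+1).
  apply: low0_div => k hk; rewrite coefB coefM coef1.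
  case: k hk => [|k] hk.
    rewrite big_ord1 /= hR0 coef_poly /= mul1r /apow addn0 (lemA ha); last by case: (n) n0.
    by rewrite eqxx subrr.
  have -> : (k.+1 == 0)%:R = 0 :> F by [].
  rewrite subr0 -[RHS](@F3 _ n alpha ha k.+1) //.
  apply: eq_bigr => j _; rewrite coef_poly ifT //; have := ltn_ord j; lia.
have [c2 h2] := RQ alpha t.
have hAQ : A - Qp alpha t = (Qp alpha t * c1 - A * c2) * 'X^(t.+1).
  rewrite mulrBl -!mulrA -h1 -h2; ring.
have := congr1 (fun p : {poly F} => p`_t) hAQ.
rewrite coefMXn ltnSn coefB coef_poly ltnSn -Qp_coef => /eqP; rewrite subr_eq0 => /eqP //.
Qed.

Definition gx (k a : nat) : nat := if (a < k - 2)%N then a else (a + 2)%N.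

Lemma gx_spec k a : ((a < k - 2)%N /\ gx k a = a) \/ ((k - 2 <= a)%N /\ gx k a = (a + 2)%N).
Proof. by rewrite /gx; case: (ssrnat.ltnP a (k - 2)) => h; [left|right]. Qed.

Lemma gexp_gx k (i : 'I_k) : gexp i = gx k i.
Proof. by []. Qed.

Lemma L2 (F : fieldType) k (hk : (5 <= k)%N) (W : nat -> F) :
  (forall a b : 'I_k, W (gexp a + gexp b)%N = 0) <->
  ((forall s, (s < (2 * k).-1)%N -> W s = 0) /\ W (2 * k)%N = 0 /\
     W (2 * k).+1 = 0 /\ W (2 * k).+2 = 0).
Proof.
split.
  move=> H.
  have H' : forall a b, (a < k)%N -> (b < k)%N -> W (gx k a + gx k b)%N = 0.
    by move=> a b ha hb; exact: (H (Ordinal ha) (Ordinal hb)).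
  have G : forall a b s, (a < k)%N -> (b < k)%N -> (gx k a + gx k b)%N = s -> W s = 0.
    by move=> a b s ha hb <-; exact: H'.
  have T : forall a b s, (a < k)%N -> (b < k)%N ->
     ((a < k - 2)%N -> (b < k - 2)%N -> (a + b)%N = s) ->
     ((a < k - 2)%N -> (k - 2 <= b)%N -> (a + (b + 2))%N = s) ->
     ((k - 2 <= a)%N -> (b < k - 2)%N -> (a + 2 + b)%N = s) ->
     ((k - 2 <= a)%N -> (k - 2 <= b)%N -> (a + 2 + (b + 2))%N = s) -> W s = 0.
    move=> a b s ha hb e1 e2 e3 e4; apply: (G a b) => //.
    case: (gx_spec k a) => [[? ->]|[? ->]]; case: (gx_spec k b) => [[? ->]|[? ->]]; auto.
  split.
    move=> s hs.
    case: (ssrnat.leqP s (2 * k - 6)) => h1.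
      by apply: (T (minn s (k - 3)) (s - minn s (k - 3))%N); lia.
    case: (ssrnat.leqP s (2 * k - 3)) => h2.
      by apply: (T (k - 2) (s - k))%N; lia.
    by apply: (T (k - 1) (k - 3))%N; lia.
  split; first by apply: (T (k - 2) (k - 2))%N; lia.
  split; first by apply: (T (k - 2) (k - 1))%N; lia.
  by apply: (T (k - 1) (k - 1))%N; lia.
move=> [H1 [H2 [H3 H4]]] a b; rewrite !gexp_gx.
have ha := ltn_ord a; have hb := ltn_ord b.
case: (gx_spec k a) => [[h1 ->]|[h1 ->]]; case: (gx_spec k b) => [[h2 ->]|[h2 ->]].
- by apply: H1; lia.
- by apply: H1; lia.
- by apply: H1; lia.
- have : ((a + 2 + (b + 2))%N = 2 * k \/ (a + 2 + (b + 2))%N = (2 * k).+1 \/ (a + 2 + (b + 2))%N = (2 * k).+2)%N by lia.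
  by case=> [->|[->|->]].
Qed.

Lemma L3 (F : fieldType) n (alpha : 'I_n -> F) (ha : injective alpha)
  (v : 'I_n -> F) (hv : forall i, v i != 0) (n0 : (0 < n)%N) :
  let W s := \sum_j v j ^+ 2 * alpha j ^+ s in
  ((forall s, (s < n.-1)%N -> W s = 0) /\ W n = 0 /\ W n.+1 = 0 /\ W n.+2 = 0) <->
  ((exists2 lambda : F, lambda != 0 &
      forall i : 'I_n, v i ^+ 2 = lambda * ucoef alpha i)
   /\ complete_hom 1 alpha = 0
   /\ complete_hom 2 alpha = 0
   /\ complete_hom 3 alpha = 0).
Proof.
move=> W.
have WL : forall lambda, (forall i, v i ^+ 2 = lambda * ucoef alpha i) ->
    forall m, W m = lambda * apow alpha m.
  move=> l hl m; rewrite /W /apow mulr_sumr; apply: eq_bigr => i _; rewrite hl; ring.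
have E : forall l, (forall i, v i ^+ 2 = l * ucoef alpha i) ->
   [/\ W n = l * complete_hom 1 alpha, W n.+1 = l * complete_hom 2 alpha &
       W n.+2 = l * complete_hom 3 alpha].
  move=> l hl; rewrite -!S_identity // -!WL //.
  by split; congr W; lia.
split.
  move=> [H0 [H1 [H2 H3]]].
  have hw := dual_trick ha H0.
  set l := \sum_j _ in hw.
  have hl : l != 0.
    apply/eqP => l0; have i : 'I_n by case: (n) n0 => // m _; exact: ord0.
    by have := hw i; rewrite l0 mul0r => /eqP; rewrite expf_eq0 /= (negbTE (hv i)).
  split; first by exists l.
  have WL' := WL l hw.
  move: H1 H2 H3; have [-> -> ->] := E l hw.
  move=> /eqP; rewrite mulf_eq0 (negbTE hl) /= => /eqP ->.
  move=> /eqP; rewrite mulf_eq0 (negbTE hl) /= => /eqP ->.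
  by move=> /eqP; rewrite mulf_eq0 (negbTE hl) /= => /eqP ->.
move=> [[l hl0 hl] [S1 [S2 S3]]].
have WL' := WL l hl.
split.
  move=> s hs; rewrite WL' /apow lemA //; last by lia.
  have -> : (s == n.-1) = false by apply/negbTE; lia.
  by rewrite mulr0.
by have [-> -> ->] := E l hl; rewrite S1 S2 S3 !mulr0.
Qed.

Lemma gexp_inj k : injective (@gexp k).
Proof.
move=> i j; rewrite !gexp_gx => h; apply: val_inj => /=.
by case: (gx_spec k i) h => [[? ->]|[? ->]]; case: (gx_spec k j) => [[? ->]|[? ->]]; lia.
Qed.

Lemma gexp_le k (i : 'I_k) : (gexp i <= k.+1)%N.
Proof. have := ltn_ord i; rewrite gexp_gx; case: (gx_spec k i) => [[? ->]|[? ->]]; lia. Qed.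

Lemma G_free (F : fieldType) k n (alpha : 'I_n -> F) (ha : injective alpha)
  (hkn : (k.+2 < n)%N) : row_free (Gmat k alpha).
Proof.
rewrite -kermx_eq0; apply/eqP/row_matrixP => r; rewrite row0.
set x := row r _.
have hx : x *m Gmat k alpha = 0 by rewrite /x -row_mul mulmx_ker row0.
pose p := \sum_(a < k) x 0 a *: 'X^(gexp a).
have hp : p = 0.
  apply/eqP; apply/negPn/negP => hp.
  have := max_poly_roots hp (rs := map alpha (enum 'I_n)).
  rewrite map_inj_uniq // enum_uniq size_map size_enum_ord.
  have -> : all (root p) [seq alpha i | i <- enum 'I_n].
    apply/allP => y /mapP [l _ ->]; rewrite /root /p horner_sum.
    apply/eqP; transitivity ((x *m Gmat k alpha) 0 l); last by rewrite hx mxE.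
    by rewrite [RHS]mxE; apply: eq_bigr => a _; rewrite hornerZ hornerXn !mxE.
  move=> /(_ isT isT) hlt.
  have hs : (size p <= k.+2)%N; last by move: (leq_trans hlt hs); lia.
  apply/leq_sizeP => j hj; rewrite coef_sum big1 // => a _.
  rewrite coefZ coefXn.
  have -> : (j == gexp a) = false by apply/negbTE; have := gexp_le a; lia.
  by rewrite mulr0.
apply/rowP => a.
have := congr1 (fun q : {poly F} => q`_(gexp a)) hp.
rewrite /= coef_sum coef0 (bigD1 a) //= big1 ?addr0.
  by rewrite coefZ coefXn eqxx mulr1 => ->; rewrite mxE.
move=> b ba; rewrite coefZ coefXn.
have -> : (gexp a == gexp b) = false by apply/negbTE; apply: contra ba => /eqP /gexp_inj ->.
by rewrite mulr0.
Qed.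

Lemma dotE (F : fieldType) n (x y : 'rV[F]_n) : eucl_dot x y = (x *m y^T) 0 0.
Proof. by rewrite /eucl_dot mxE; apply: eq_bigr => j _; rewrite mxE. Qed.

Lemma L1 (F : finFieldType) k n (hk : (5 <= k)%N) (hn : n = (2 * k)%N)
  (alpha : 'I_n -> F) (ha : injective alpha) (v : 'I_n -> F) (hv : forall i, v i != 0) :
  self_dual (code_of (Gmat k alpha *m diag_mx (\row_j v j))) <->
  forall a b : 'I_k, \sum_j v j ^+ 2 * alpha j ^+ (gexp a + gexp b) = 0.
Proof.
set M := Gmat k alpha *m diag_mx _.
have hM : forall a j, M a j = alpha j ^+ gexp a * v j by move=> a j; rewrite /M mul_mx_diag !mxE.
have hdot : forall a b, eucl_dot (row a M) (row b M)
    = \sum_j v j ^+ 2 * alpha j ^+ (gexp a + gexp b).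
  move=> a b; rewrite /eucl_dot; apply: eq_bigr => j _.
  rewrite [row a M 0 j]mxE [row b M 0 j]mxE !hM exprD; ring.
have hrow : forall a, row a M \in code_of M by move=> a; rewrite unfold_in /code_of row_sub.
split.
  move=> sd a b; have := sd (row a M); rewrite hrow => /esym.
  rewrite unfold_in /dual_code => /forallP /(_ (row b M)); rewrite hrow /= => /eqP.
  by rewrite hdot.
move=> H.
have MMt : M *m M^T = 0.
  apply/matrixP => a b; rewrite [RHS]mxE -(H a b) -hdot [LHS]mxE /eucl_dot.
  apply: eq_bigr => j _.
  by rewrite [M^T j b]mxE [row a M 0 j]mxE [row b M 0 j]mxE.
have rM : \rank M = k.
  rewrite mxrankMfree; first by apply/eqP; apply: G_free ha _; lia.
  rewrite row_free_unit unitmxE det_diag unitfE prodf_seq_neq0.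
  by apply/allP => j _; rewrite mxE hv.
move=> x; apply/idP/idP.
  rewrite unfold_in /code_of => /submxP [z ->].
  rewrite unfold_in /dual_code; apply/forallP => y; apply/implyP.
  rewrite unfold_in /code_of => /submxP [z' ->].
  by rewrite dotE trmx_mul mulmxA -(mulmxA z) MMt mulmx0 mul0mx mxE.
rewrite unfold_in /dual_code => /forallP hx.
have xMt : x *m M^T = 0.
  apply/rowP => b; have := hx (row b M); rewrite hrow /= => /eqP E; rewrite [RHS]mxE -E.
  by rewrite dotE !mxE; apply: eq_bigr => j _; rewrite !mxE.
have hK : (M <= kermx M^T)%MS by apply/sub_kermxP.
have hK2 : (kermx M^T <= M)%MS.
  by rewrite -(mxrank_leqif_sup hK).2 mxrank_ker mxrank_tr rM hn; apply/eqP; lia.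
rewrite unfold_in /code_of; apply: submx_trans hK2; exact/sub_kermxP.
Qed.

Unset Implicit Arguments.


Theorem corollary3p15 (F : finFieldType) (k n : nat)
  (hk : (5 <= k)%N) (hn : n = (2 * k)%N) (hq : (n <= #|F|)%N)
  (alpha : 'I_n -> F) (halpha : injective alpha)
  (v : 'I_n -> F) (hv : forall i, v i != 0) :
  self_dual (code_of (Gmat k alpha *m diag_mx (\row_j v j)))
  <->
  ((exists2 lambda : F, lambda != 0 &
      forall i : 'I_n, v i ^+ 2 = lambda * ucoef alpha i)
   /\ complete_hom 1 alpha = 0
   /\ complete_hom 2 alpha = 0
   /\ complete_hom 3 alpha = 0).
Proof.
apply: (iff_trans (L1 hk hn halpha hv)).
apply: (iff_trans (L2 hk (fun s => \sum_j v j ^+ 2 * alpha j ^+ s))).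
subst n.
have n0 : (0 < 2 * k)%N by lia.
exact: (L3 halpha hv n0).
Qed.
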